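(* Let $K,G,\eta,\bar\eta,\xi,c_0>0$ and let $H:\mathbb R_+\to\mathbb R_+$ be nondecreasing, strongly semismooth, with $H(0)=0$. For $\boldsymbol\sigma\in\mathbb R^{3\times3}_{sym}$ and $\kappa\ge0$ let $f(\boldsymbol\sigma,\kappa)=\hat f(p(\boldsymbol\sigma),\varrho(\boldsymbol\sigma),\kappa)=\sqrt{\tfrac12}\,\varrho(\boldsymbol\sigma)+\eta\, p(\boldsymbol\sigma)-\xi(c_0+\kappa)$. Let a trial stress $\boldsymbol\sigma^{tr}\in\mathbb R^{3\times3}_{sym}$ and $\bar\varepsilon^{p,tr}\ge0$ be given, with $p^{tr}=p(\boldsymbol\sigma^{tr})$, $\mathbf s^{tr}=\mathbf s(\boldsymbol\sigma^{tr})$, $\varrho^{tr}=\|\mathbf s^{tr}\|$, $\mathbf n^{tr}=\mathbf s^{tr}/\varrho^{tr}$, and assume $f(\boldsymbol\sigma^{tr},H(\bar\varepsilon^{p,tr}))>0$. Consider the problem (P): find $\boldsymbol\sigma\in\mathbb R^{3\times3}_{sym}$, $\bar\varepsilon^p$, $\triangle\lambda$ such that $$\boldsymbol\sigma=\boldsymbol\sigma^{tr}-\triangle\lambda\big(G\sqrt2\,\hat{\mathbf n}+K\bar\eta\mathbf I\big)\ \text{for some }\hat{\mathbf n}\in\partial\varrho(\boldsymbol\sigma),\quad \bar\varepsilon^p=\bar\varepsilon^{p,tr}+\triangle\lambda\xi,\quad f(\boldsymbol\sigma,H(\bar\varepsilon^p))=0.$$ If $(\boldsymbol\sigma,\bar\varepsilon^p,\triangle\lambda)$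 solves (P) and $p=p(\boldsymbol\sigma)$, $\varrho=\varrho(\boldsymbol\sigma)$, then $(p,\varrho,\bar\varepsilon^p,\triangle\lambda)$ solves the system (R): $$p=p^{tr}-\triangle\lambda K\bar\eta,\quad \varrho=(\varrho^{tr}-\triangle\lambda G\sqrt2)^+,\quad \bar\varepsilon^p=\bar\varepsilon^{p,tr}+\triangle\lambda\xi,\quad \hat f(p,\varrho,H(\bar\varepsilon^p))=0.$$ Conversely, if $(p,\varrho,\bar\varepsilon^p,\triangle\lambda)$ solves (R), then $(\boldsymbol\sigma,\bar\varepsilon^p,\triangle\lambda)$ solves (P), where $\boldsymbol\sigma=\boldsymbol\sigma^{tr}-\triangle\lambda(G\sqrt2\,\mathbf n^{tr}+K\bar\eta\mathbf I)$ if $\varrho^{tr}>\triangle\lambda G\sqrt2$ and $\boldsymbol\sigma=(p^{tr}-\triangle\lambda K\bar\eta)\mathbf I$ if $\varrho^{tr}\le\triangle\lambda G\sqrt2$.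
   Context: $\mathbb R^{3\times3}_{sym}$: real symmetric $3\times3$ matrices with Frobenius product '':'' and norm; $\mathbf I$ identity; $p(\boldsymbol\sigma)=\frac13\mathbf I:\boldsymbol\sigma$, $\mathbf s(\boldsymbol\sigma)=\boldsymbol\sigma-p(\boldsymbol\sigma)\mathbf I$, $\varrho(\boldsymbol\sigma)=\|\mathbf s(\boldsymbol\sigma)\|$; $(x)^+=\max\{0,x\}$. The subdifferential of $\varrho$ is $\partial\varrho(\boldsymbol\sigma)=\{\mathbf s(\boldsymbol\sigma)/\varrho(\boldsymbol\sigma)\}$ if $\varrho(\boldsymbol\sigma)>0$ and $\partial\varrho(\boldsymbol\sigma)=\{\hat{\mathbf n}\in\mathbb R^{3\times3}_{sym}:\mathbf I:\hat{\mathbf n}=0,\ \|\hat{\mathbf n}\|\le1\}$ if $\varrho(\boldsymbol\sigma)=0$. A function is strongly semismooth if it is locally Lipschitz, directionally differentiable, and $F(x+h)-F(x)-Vh=O(\|h\|^2)$ for all $V$ in the Clarke generalized Jacobian $\partial F(x+h)$ as $h\to0$. *)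

(* Defs.v *)
From HB Require Import structures.
From mathcomp Require Import all_boot all_order all_algebra.
From mathcomp Require Import all_classical all_reals all_analysis.
Set Implicit Arguments. Unset Strict Implicit. Unset Printing Implicit Defensive.
Import Order.TTheory GRing.Theory Num.Theory.
Import numFieldNormedType.Exports.
Local Open Scope classical_set_scope.
Local Open Scope ring_scope.

Section Defs.
Variable R : realType.

Definition symm (A : 'M[R]_3) : Prop := A^T = A.
Definition fdot (A B : 'M[R]_3) : R := \sum_(i < 3) \sum_(j < 3) A i j * B i j.
Definition fnorm (A : 'M[R]_3) : R := Num.sqrt (fdot A A).
Definition pres (s : 'M[R]_3) : R := 3^-1 * fdot 1%:M s.
Definition dev (s : 'M[R]_3) : 'M[R]_3 := s - (pres s)%:M.
Definition rho (s : 'M[R]_3) : R := fnorm (dev s).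
Definition pos_part (x : R) : R := Num.max 0 x.

Definition subdiff_rho (s : 'M[R]_3) : set 'M[R]_3 :=
  if 0 < rho s then [set (rho s)^-1 *: dev s]
  else [set n | symm n /\ fdot 1%:M n = 0 /\ fnorm n <= 1].

Definition fhat (eta xi c0 : R) (p r kappa : R) : R :=
  Num.sqrt (2^-1) * r + eta * p - xi * (c0 + kappa).
Definition fyield (eta xi c0 : R) (s : 'M[R]_3) (kappa : R) : R :=
  fhat eta xi c0 (pres s) (rho s) kappa.

Definition loc_lipschitz_nonneg (F : R -> R) : Prop :=
  forall x, 0 <= x -> exists L r : R, 0 < r /\
    forall y z, 0 <= y -> 0 <= z -> `|y - x| < r -> `|z - x| < r ->
      `|F y - F z| <= L * `|y - z|.

Definition dir_diff_nonneg (F : R -> R) : Prop :=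
  forall x h, 0 <= x -> (0 < x \/ 0 <= h) ->
    exists d : R, (fun t => (F (x + t * h) - F x) / t) t @[t --> 0^'+] --> d.

Definition bsubdiff (F : R -> R) (y : R) : set R :=
  [set v | exists u : nat -> R,
      (forall k, 0 < u k /\ derivable F (u k) 1) /\
      u @ \oo --> y /\ (fun k => derive1 F (u k)) @ \oo --> v].

(* Clarke generalized Jacobian (convex hull of the B-subdifferential, in 1-d) *)
Definition clarke (F : R -> R) (y : R) : set R :=
  [set v | exists a b, bsubdiff F y a /\ bsubdiff F y b /\ a <= v /\ v <= b].

Definition strongly_semismooth_nonneg (F : R -> R) : Prop :=
  loc_lipschitz_nonneg F /\ dir_diff_nonneg F /\
  forall x, 0 <= x -> exists C d : R, 0 < d /\
    forall h V, `|h| < d -> 0 <= x + h -> clarke F (x + h) V ->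
      `|F (x + h) - F x - V * h| <= C * h ^+ 2.

Definition solves_P (K G eta etab xi c0 : R) (H : R -> R)
  (sigtr : 'M[R]_3) (epstr : R) (sig : 'M[R]_3) (eps dl : R) : Prop :=
  symm sig /\ 0 <= dl /\
  (exists nh, subdiff_rho sig nh /\
     sig = sigtr - dl *: (G * Num.sqrt 2 *: nh + (K * etab)%:M)) /\
  eps = epstr + dl * xi /\
  fyield eta xi c0 sig (H eps) = 0.

Definition solves_R (K G eta etab xi c0 : R) (H : R -> R)
  (sigtr : 'M[R]_3) (epstr : R) (p r eps dl : R) : Prop :=
  0 <= dl /\
  p = pres sigtr - dl * K * etab /\
  r = pos_part (rho sigtr - dl * G * Num.sqrt 2) /\
  eps = epstr + dl * xi /\
  fhat eta xi c0 p r (H eps) = 0.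

Definition sigma_of_R (K G etab : R) (sigtr : 'M[R]_3) (dl : R) : 'M[R]_3 :=
  if dl * G * Num.sqrt 2 < rho sigtr then
    sigtr - dl *: (G * Num.sqrt 2 *: ((rho sigtr)^-1 *: dev sigtr) + (K * etab)%:M)
  else (pres sigtr - dl * K * etab)%:M.

End Defs.

(* Main.v *)
Require Import Defs.
From HB Require Import structures.
From mathcomp Require Import all_boot all_order all_algebra.
From mathcomp Require Import all_classical all_reals all_analysis.
From mathcomp Require Import ring lra.
Import Order.TTheory GRing.Theory Num.Theory.
Local Open Scope ring_scope.

Section Aux.
Variable R : realType.
Implicit Types (A B C N S : 'M[R]_3) (c : R).

Lemma fdotD A B C : fdot A (B + C) = fdot A B + fdot A C.
Proof.
rewrite /fdot -big_split; apply: eq_bigr => i _.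
rewrite -big_split; apply: eq_bigr => j _; by rewrite !mxE mulrDr.
Qed.

Lemma fdotZ A B c : fdot A (c *: B) = c * fdot A B.
Proof.
rewrite /fdot mulr_sumr; apply: eq_bigr => i _.
rewrite mulr_sumr; apply: eq_bigr => j _; rewrite !mxE; ring.
Qed.

Lemma fdotN A B : fdot A (- B) = - fdot A B.
Proof. by rewrite -scaleN1r fdotZ mulN1r. Qed.

Lemma fdotB A B C : fdot A (B - C) = fdot A B - fdot A C.
Proof. by rewrite fdotD fdotN. Qed.

Lemma fdot11 : fdot 1%:M (1%:M : 'M[R]_3) = 3.
Proof.
rewrite /fdot !big_ord_recr !big_ord0 /= !mxE /=. ring.
Qed.

Lemma fdot1C c : fdot 1%:M (c%:M : 'M[R]_3) = 3 * c.
Proof. have -> : (c%:M : 'M[R]_3) = c *: 1%:M by rewrite scalemx1.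
by rewrite fdotZ fdot11 mulrC. Qed.

Lemma presD A B : pres (A + B) = pres A + pres B.
Proof. by rewrite /pres fdotD mulrDr. Qed.
Lemma presB A B : pres (A - B) = pres A - pres B.
Proof. by rewrite /pres fdotB mulrBr. Qed.
Lemma presZ c A : pres (c *: A) = c * pres A.
Proof. by rewrite /pres fdotZ mulrCA. Qed.
Lemma presC c : pres (c%:M : 'M[R]_3) = c.
Proof. rewrite /pres fdot1C mulrA mulVf ?mul1r //. Qed.

Lemma pres_dev A : pres (dev A) = 0.
Proof. by rewrite /dev presB presC subrr. Qed.

Lemma fdot_dev A : fdot 1%:M (dev A) = 0.
Proof.
have := pres_dev A; rewrite /pres => /eqP; rewrite mulf_eq0 invr_eq0.
by case/orP => /eqP // h3; move: h3; lra.
Qed.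

Lemma fdotAA_ge0 A : 0 <= fdot A A.
Proof.
rewrite /fdot; apply: sumr_ge0 => i _; apply: sumr_ge0 => j _.
by rewrite -expr2 sqr_ge0.
Qed.

Lemma fnorm_ge0 A : 0 <= fnorm A.
Proof. exact: sqrtr_ge0. Qed.

Lemma fnormZ c A : fnorm (c *: A) = `|c| * fnorm A.
Proof.
rewrite /fnorm fdotZ.
have -> : fdot (c *: A) A = c * fdot A A.
  rewrite /fdot mulr_sumr; apply: eq_bigr => i _.
  rewrite mulr_sumr; apply: eq_bigr => j _; rewrite !mxE; ring.
by rewrite mulrA -expr2 sqrtrM ?sqr_ge0 // sqrtr_sqr.
Qed.

Lemma fnorm_eq0 A : fnorm A = 0 -> A = 0.
Proof.
move=> /eqP; rewrite sqrtr_eq0 => h.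
have h0 : fdot A A = 0 by apply/eqP; rewrite eq_le h fdotAA_ge0.
apply/matrixP => i j; rewrite mxE.
have hi : \sum_(j < 3) A i j * A i j = 0.
  apply: (psumr_eq0P (P := predT) _ h0) => // k _.
  by apply: sumr_ge0 => l _; rewrite -expr2 sqr_ge0.
have := psumr_eq0P (P := predT) _ hi.
move=> /(_ (fun l _ => ltac:(rewrite -expr2 sqr_ge0 //)) j isT) /eqP.
by rewrite mulf_eq0 orbb => /eqP.
Qed.


Lemma symmE A : symm A <-> forall i j, A j i = A i j.
Proof.
split; first by move=> h i j; rewrite -{1}h mxE.
by move=> h; apply/matrixP => i j; rewrite mxE h.
Qed.

Lemma symmB A B : symm A -> symm B -> symm (A - B).
Proof. move=> /symmE ha /symmE hb; apply/symmE => i j; by rewrite !mxE ha hb. Qed.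
Lemma symmD A B : symm A -> symm B -> symm (A + B).
Proof. move=> /symmE ha /symmE hb; apply/symmE => i j; by rewrite !mxE ha hb. Qed.
Lemma symmZ c A : symm A -> symm (c *: A).
Proof. move=> /symmE ha; apply/symmE => i j; by rewrite !mxE ha. Qed.
Lemma symmC c : symm (c%:M : 'M[R]_3).
Proof. exact: tr_scalar_mx. Qed.
Lemma symm_dev A : symm A -> symm (dev A).
Proof. move=> h; apply: symmB => //; exact: symmC. Qed.

Lemma dev_step (S N : 'M[R]_3) (dl g k : R) :
  dev (S - dl *: (g *: N + k%:M)) = dev S - (dl * g) *: dev N.
Proof.
rewrite /dev presB presZ presD presZ presC.
apply/matrixP => i j; rewrite !mxE; case: (i == j); rewrite ?mulr1n ?mulr0n; ring.
Qed.

Lemma dev_tr0 N : fdot 1%:M N = 0 -> dev N = N.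
Proof. by move=> h; rewrite /dev /pres h mulr0 (raddf0 (scalar_mx (V:=R) (n:=3))) subr0. Qed.

Lemma devC c : dev (c%:M : 'M[R]_3) = 0.
Proof. by rewrite /dev presC subrr. Qed.

Lemma fnorm0 : fnorm (0 : 'M[R]_3) = 0.
Proof. by rewrite -(scale0r (0 : 'M[R]_3)) fnormZ normr0 mul0r. Qed.

Lemma rho_ge0 A : 0 <= rho A.
Proof. exact: fnorm_ge0. Qed.

End Aux.

Theorem theorem2 (R : realType) (K G eta etab xi c0 : R) (H : R -> R)
  (hK : 0 < K) (hG : 0 < G) (heta : 0 < eta) (hetab : 0 < etab)
  (hxi : 0 < xi) (hc0 : 0 < c0)
  (hH0 : H 0 = 0)
  (hHpos : forall x, 0 <= x -> 0 <= H x)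
  (hHmon : forall x y, 0 <= x -> x <= y -> H x <= H y)
  (hHss : strongly_semismooth_nonneg H)
  (sigtr : 'M[R]_3) (epstr : R)
  (hsym : symm sigtr) (hepstr : 0 <= epstr)
  (htrial : 0 < fyield eta xi c0 sigtr (H epstr)) :
  (forall (sig : 'M[R]_3) (eps dl : R),
      solves_P K G eta etab xi c0 H sigtr epstr sig eps dl ->
      solves_R K G eta etab xi c0 H sigtr epstr (pres sig) (rho sig) eps dl) /\
  (forall p r eps dl : R,
      solves_R K G eta etab xi c0 H sigtr epstr p r eps dl ->
      solves_P K G eta etab xi c0 H sigtr epstr (sigma_of_R K G etab sigtr dl) eps dl).
Proof.
have hg : 0 < G * Num.sqrt 2 by rewrite mulr_gt0 // sqrtr_gt0 ltr0n.
split.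
- move=> sig eps dl [hs [hdl [[nh [hnh hsig]] [heps hf]]]].
  have htr : fdot 1%:M nh = 0.
    move: hnh; rewrite /subdiff_rho; case: ifP => _.
      by move=> ->; rewrite fdotZ fdot_dev mulr0.
    by case=> _ [].
  have hpn : pres nh = 0 by rewrite /pres htr mulr0.
  have hp : pres sig = pres sigtr - dl * K * etab.
    by rewrite hsig presB presZ presD presZ presC hpn; ring.
  have hd : dev sig = dev sigtr - (dl * (G * Num.sqrt 2)) *: nh.
    by rewrite hsig dev_step (@dev_tr0 R nh htr).
  have ha : 0 <= dl * (G * Num.sqrt 2) by rewrite mulr_ge0 // ltW.
  split=> //; split=> //; split; last by split.
  have [hpos|hneg] := ltP 0 (rho sig).
  + move: hnh; rewrite /subdiff_rho hpos => hnh.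
    have ht : dev sigtr = (1 + dl * (G * Num.sqrt 2) / rho sig) *: dev sig.
      rewrite hnh in hd; move: (dev sig) (dev sigtr) hd => D T hd.
      apply/matrixP => i j.
      move: (congr1 (fun M : 'M[R]_3 => M i j) hd); rewrite !mxE => e.
      by rewrite mulrDl mul1r {1}e; ring.
    have hrt : rho sigtr = rho sig + dl * (G * Num.sqrt 2).
      rewrite /rho ht fnormZ -/(rho sig) ger0_norm; last first.
        by rewrite addr_ge0 // divr_ge0 // ltW.
      by field; rewrite gt_eqF.
    rewrite /pos_part hrt.
    have -> : rho sig + dl * (G * Num.sqrt 2) - dl * G * Num.sqrt 2 = rho sig by ring.
    by apply/esym/max_idPr; rewrite ltW.
  + have h0 : rho sig = 0 by apply/eqP; rewrite eq_le hneg rho_ge0.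
    move: hnh; rewrite /subdiff_rho h0 ltxx => -[_ [_ hn1]].
    have hd0 : dev sig = 0 by apply: fnorm_eq0.
    have ht : dev sigtr = (dl * (G * Num.sqrt 2)) *: nh.
      have e : dev sigtr - (dl * (G * Num.sqrt 2)) *: nh = 0 by rewrite -hd.
      by apply/eqP; rewrite -subr_eq0 e.
    have hrt : rho sigtr <= dl * (G * Num.sqrt 2).
      rewrite /rho ht fnormZ ger0_norm //.
      by rewrite -[X in _ <= X]mulr1 ler_wpM2l.
    rewrite /pos_part; apply/esym/max_idPl.
    by rewrite subr_le0 -mulrA.
- move=> p r eps dl [hdl [hp [hr [heps hf]]]].
  have ha : 0 <= dl * G * Num.sqrt 2 by rewrite -mulrA mulr_ge0 // ltW.
  rewrite /sigma_of_R; case: ifP => hlt.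
  + set a := dl * G * Num.sqrt 2 in ha hlt hr *.
    have hrpos : 0 < rho sigtr by apply: le_lt_trans hlt.
    set nh := (rho sigtr)^-1 *: dev sigtr.
    have hnt : fdot 1%:M nh = 0 by rewrite fdotZ fdot_dev mulr0.
    set S := sigtr - _.
    have hpS : pres S = p.
      have hpn : pres nh = 0 by rewrite /pres hnt mulr0.
      rewrite /S presB presZ presD presZ presC hpn hp; ring.
    have hdS : dev S = (1 - a / rho sigtr) *: dev sigtr.
      rewrite /S dev_step (@dev_tr0 R nh hnt) /nh scalerA scalerBl scale1r /a; congr (_ - _ *: _).
      ring.
    have hrS : rho S = rho sigtr - a.
      rewrite /rho hdS fnormZ -/(rho sigtr) ger0_norm; last first.
        by rewrite subr_ge0 ler_pdivrMr // mul1r ltW.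
      by field; rewrite gt_eqF.
    have hrS' : rho S = r by rewrite hr /pos_part hrS; apply/esym/max_idPr; rewrite subr_ge0 ltW.
    split; first by apply: symmB => //; apply: symmZ; apply: symmD;
      [apply: symmZ; apply: symmZ; apply: symm_dev | apply: symmC].
    split=> //; split; last by split=> //; rewrite /fyield hpS hrS'.
    exists nh; split=> //.
    rewrite /subdiff_rho hrS subr_gt0 hlt hdS scalerA /nh; congr (_ *: _).
    by field; rewrite ?gt_eqF // ?subr_gt0.
  + move/negbT: hlt; rewrite -leNgt => hle.
    set a := dl * G * Num.sqrt 2 in ha hle hr *.
    set nh := a^-1 *: dev sigtr.
    have hdv : (a / a) *: dev sigtr = dev sigtr.
      have [a0|an0] := eqVneq a 0.
        have : rho sigtr = 0 by apply/eqP; rewrite eq_le rho_ge0 andbT -a0.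
        by move/fnorm_eq0 => ->; rewrite scaler0.
      by rewrite divff // scale1r.
    have hrS : rho ((pres sigtr - dl * K * etab)%:M) = 0 by rewrite /rho devC fnorm0.
    split; first exact: symmC.
    split=> //; split; last first.
      split=> //; rewrite /fyield presC hrS -hp.
      have hr0 : r = 0 by rewrite hr /pos_part; apply/max_idPl; rewrite subr_le0.
      by rewrite hr0 in hf.
    exists nh; split.
      rewrite /subdiff_rho hrS ltxx; split; first by apply: symmZ; apply: symm_dev.
      split; first by rewrite fdotZ fdot_dev mulr0.
      rewrite /nh fnormZ -/(rho sigtr).
      have [a0|an0] := eqVneq a 0; first by rewrite a0 invr0 normr0 mul0r ler01.
      have hap : 0 < a by rewrite lt_neqAle eq_sym an0 ha.
      by rewrite ger0_norm ?invr_ge0 // mulrC ler_pdivrMr // mul1r.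
    rewrite /nh scalerDr !scalerA.
    have -> : dl * (G * Num.sqrt 2) / a = a / a by rewrite /a mulrA.
    rewrite hdv /dev; apply/matrixP => i j; rewrite !mxE; case: (i == j);
      rewrite ?mulr1n ?mulr0n; ring.
Qed.
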